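(* Assume that for every $x\in V$ the functions $s\mapsto H(x,s)$ and $s\mapsto f_l(x,s)$ ($l=1,\dots,m$) are nondecreasing on $[0,\infty)$, and that $H$ is $1$-Lipschitz in $s$, i.e. $|H(x,s)-H(x,t)|\le |s-t|$ for all $x\in V$ and all $s,t\in[0,\infty)$. Then there exists a unique vector $(u^1,u^2,\dots,u^m)$ of functions $u^l:V\to\mathbb{R}$ satisfying the discrete system (S).
   Context: Let $G=(V,E)$ be a finite, connected, undirected graph with at least two vertices. For $x,y\in V$, $d(x,y)$ denotes the graph (shortest-path) distance, and $\deg(x)=|\{y\in V:(x,y)\in E\}|$. The boundary of $G$ is $$\partial G=\Big\{x\in V:\ \exists\, y\in V \text{ with } \tfrac{1}{\deg(x)}\textstyle\sum_{(x,z)\in E} d(z,y)<d(x,y)\Big\},$$ and the interior is $G^o=V\setminus\partial G$. For $r:V\to\mathbb{R}$, the mean value at $x$ is $\overline{r}(x)=\frac{1}{\deg(x)}\sum_{(x,y)\in E} r(y)$. Fix an integer $m\ge1$. Let $H:V\times[0,\infty)\to\mathbb{R}$ and $f_l:V\times[0,\infty)\to\mathbb{R}$ ($l=1,\dots,m$) be continuous in the second variable with $H(x,0)=0$ and $f_l(x,0)=0$ for all $x\in V$; they are extended to negative arguments by $H(x,s)=-H(x,-s)$ and $f_l(x,s)=-f_l(x,-s)$ for $s<0$. Let $\phi^l:\partial G\to[0,\infty)$ ($l=1,\dots,m$) be boundary data satisfying $\phi^i(x)\phi^j(x)=0$ for all $x\in\partial G$ and $i\neq j$. The discrete system (S) for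 $(u^1,\dots,u^m)$, $u^l:V\to\mathbb{R}$, is: for every $l=1,\dots,m$, $$u^l(x)=\max\Big(H\Big(x,\ \overline{u}^l(x)-\sum_{p\neq l}\overline{u}^p(x)\Big)-f_l\big(x,u^l(x)\big),\ 0\Big)\quad (x\in G^o),\qquad u^l(x)=\phi^l(x)\quad (x\in\partial G).$$ *)

(* Defs.v *)
From HB Require Import structures.
From mathcomp Require Import all_boot all_order all_algebra.
From mathcomp Require Import all_classical all_reals all_analysis.
Set Implicit Arguments. Unset Strict Implicit. Unset Printing Implicit Defensive.
Import Order.TTheory GRing.Theory Num.Theory.
Local Open Scope ring_scope.

Section GraphDefs.
Variables (V : finType) (e : rel V).

Definition ball (k : nat) (x : V) : {set V} :=
  iter k (fun S : {set V} => S :|: [set z | [exists w in S, e w z]]) [set x].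

(* shortest-path distance: the least k with y in ball k x
   (for a connected graph this is < #|V|) *)
Definition gdist (x y : V) : nat :=
  find (fun k => y \in ball k x) (iota 0 #|V|).

Definition gdeg (x : V) : nat := #|[set y | e x y]|.

Definition mean_val {R : realType} (r : V -> R) (x : V) : R :=
  (gdeg x)%:R^-1 * \sum_(y in V | e x y) r y.

Definition in_boundary {R : realType} (x : V) : Prop :=
  exists y : V, mean_val (fun z => ((gdist z y)%:R : R)) x < (gdist x y)%:R.

End GraphDefs.

(* Main.v *)
Require Import Defs.
From HB Require Import structures.
From mathcomp Require Import all_boot all_order all_algebra.
From mathcomp Require Import all_classical all_reals all_analysis.
From mathcomp Require Import ring lra.
Import Order.TTheory GRing.Theory Num.Theory.
Import numFieldNormedType.Exports.
Local Open Scope classical_set_scope.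
Local Open Scope ring_scope.
Section Scalar.
Variables (R : realType) (h g : R -> R).
Hypotheses (h0 : h 0 = 0) (hodd : forall s : R, s < 0 -> h s = - h (- s))
  (hmono : forall s t : R, 0 <= s -> s <= t -> h s <= h t)
  (hlip : forall s t : R, 0 <= s -> 0 <= t -> `|h s - h t| <= `|s - t|)
  (g0 : g 0 = 0) (gmono : forall s t : R, 0 <= s -> s <= t -> g s <= g t)
  (gcont : {within [set s : R | 0 <= s], continuous g}).

Definition sol (a t : R) := 0 <= t /\ t = Num.max (h a - g t) 0.

Lemma h_le_pos {a : R} : 0 <= a -> h a <= a.
Proof.
move=> a0; have := hlip a 0 a0 (lexx 0); rewrite h0 !subr0 => /(le_trans (ler_norm _)).
by rewrite ger0_norm.
Qed.

Lemma h_le_npos {a : R} : a <= 0 -> h a <= 0.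
Proof.
rewrite le_eqVlt => /orP[/eqP->|a0]; first by rewrite h0 lexx.
rewrite (hodd a a0) oppr_le0; have := hmono 0 (-a) (lexx 0); rewrite h0; apply.
by rewrite oppr_ge0 ltW.
Qed.

Lemma hlip_ext (a b : R) : 0 <= a -> h a - h b <= `|a - b|.
Proof.
move=> a0; have [b0|b0] := leP 0 b.
  exact: le_trans (ler_norm _) (hlip a b a0 b0).
rewrite (hodd b b0) opprK.
have h2 := h_le_pos a0; have h1 : h (-b) <= -b by apply: h_le_pos; rewrite oppr_ge0 ltW.
rewrite ger0_norm; first by lra.
by rewrite subr_ge0 (le_trans (ltW b0)).
Qed.

Lemma sol_eq {a t : R} : sol a t -> 0 < t -> t = h a - g t.
Proof.
move=> [t0 ht] tpos; have : 0 < Num.max (h a - g t) 0 by rewrite -ht.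
rewrite lt_max ltxx orbF => hp; by rewrite {1}ht max_l // ltW.
Qed.

Lemma sol_pos {a t : R} : sol a t -> 0 < t -> 0 < a /\ t <= a.
Proof.
move=> st tpos; have e := sol_eq st tpos.
have gt0 : 0 <= g t by rewrite -g0 (gmono 0 t) ?lexx // st.1.
have [a0|a0] := leP a 0.
  by have := h_le_npos a0; lra.
have hh := h_le_pos (ltW a0); split => //; lra.
Qed.

Lemma sol_cmp {a b t u : R} : sol a t -> sol b u -> t - u <= `|a - b|.
Proof.
move=> st su; have [tu|ut] := leP t u.
  by rewrite (le_trans _ (normr_ge0 _)) // subr_le0.
have [t0 u0] := (st.1, su.1).
have tpos : 0 < t by exact: le_lt_trans u0 ut.
have [a0 _] := sol_pos st tpos.
have gtu : g u <= g t by apply: (gmono u t) => //; exact: ltW.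
have e1 := sol_eq st tpos.
have e2 : h b - g u <= u by rewrite {2}su.2 le_max lexx.
have := hlip_ext a b (ltW a0); lra.
Qed.

Lemma sol_lip {a b t u : R} : sol a t -> sol b u -> `|t - u| <= `|a - b|.
Proof.
move=> st su; rewrite ler_norml (sol_cmp st su) andbT.
by rewrite lerNl opprB distrC (sol_cmp su st).
Qed.

Lemma sol_ex (a : R) : exists t, sol a t.
Proof.
have [ha|ha] := leP (h a) 0.
  exists 0; split; first by rewrite lexx.
  by rewrite g0 subr0 max_r.
pose k := fun t => t + g t.
have gh : 0 <= g (h a) by rewrite -g0 (gmono 0 (h a)) ?lexx // ltW.
have kc : {within `[0, h a], continuous k}.
  apply: (@continuous_subspaceW _ _ `[0, h a] [set s : R | 0 <= s]).
    by move=> s /=; rewrite in_itv /= => /andP[].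
  apply: (@within_continuousD _ _ _ _ (fun t => t) g) => //.
  by apply: continuous_subspaceT => x; exact: cvg_id.
have hv : Num.min (k 0) (k (h a)) <= h a <= Num.max (k 0) (k (h a)).
  rewrite /k g0 addr0 ge_min le_max; apply/andP; split; apply/orP; first by left; rewrite ltW.
  by right; lra.
have [c] := @IVT R k 0 (h a) (h a) (ltW ha) kc hv.
rewrite in_itv /= => /andP[c0 cle] kc'.
exists c; split => //; rewrite /k in kc'.
by rewrite max_l; lra.
Qed.
End Scalar.
Section Local.
Variables (R : realType) (m : nat).
Implicit Types (U V A B M : 'I_m -> R).

Definition sdef U (l : 'I_m) := U l - \sum_(p < m | p != l) U p.

Lemma sum_others_ge M (l k : 'I_m) : (forall p, 0 <= M p) -> k != l ->
  M k <= \sum_(p < m | p != l) M p.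
Proof.
move=> M0 kl; rewrite (bigD1 k) //= lerDl; apply: sumr_ge0 => p _; exact: M0.
Qed.

Lemma sdef_pair M (l k : 'I_m) : (forall p, 0 <= M p) -> l != k ->
  sdef M l + sdef M k <= 0.
Proof.
move=> M0 lk; rewrite /sdef.
have := sum_others_ge M k l M0 lk; have := sum_others_ge M l k M0.
rewrite eq_sym lk => /(_ isT); lra.
Qed.

Lemma sdef_supp U (i : 'I_m) : (forall p, p != i -> U p = 0) ->
  forall l, sdef U l = if l == i then U i else - U i.
Proof.
move=> U0 l; rewrite /sdef; case: eqP => [->|/eqP li].
  by rewrite big1 ?subr0 // => p; exact: U0.
rewrite (U0 _ li) (bigD1 i) 1?eq_sym //= big1 ?addr0 ?sub0r // => p /andP[_]; exact: U0.
Qed.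

Lemma local_est U V A B :
  (forall k, 0 <= U k) -> (forall k, 0 <= V k) ->
  (forall k, 0 < U k -> U k <= A k) -> (forall k, 0 < V k -> V k <= B k) ->
  (forall k, `|U k - V k| <= `|A k - B k|) ->
  (forall k j, k != j -> A k + A j <= 0) -> (forall k j, k != j -> B k + B j <= 0) ->
  forall l, exists k, `|sdef U l - sdef V l| <= `|A k - B k|.
Proof.
move=> U0 V0 UA VB UV AA BB l.
have uniqU : forall k j, 0 < U k -> 0 < U j -> k = j.
  move=> k j uk uj; apply/eqP; apply/negPn/negP => kj.
  have := AA _ _ kj; have := UA _ uk; have := UA _ uj; lra.
have uniqV : forall k j, 0 < V k -> 0 < V j -> k = j.
  move=> k j uk uj; apply/eqP; apply/negPn/negP => kj.
  have := BB _ _ kj; have := VB _ uk; have := VB _ uj; lra.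
have zero_of : forall (W : 'I_m -> R) i, (forall k, 0 <= W k) ->
    (forall k j, 0 < W k -> 0 < W j -> k = j) -> 0 < W i -> forall p, p != i -> W p = 0.
  move=> W i W0 uW wi p pi; apply/eqP; rewrite eq_le W0 andbT leNgt; apply/negP => wp.
  by move/eqP: pi; apply; exact: uW.
have case2 : forall i, (forall p, p != i -> U p = 0) -> (forall p, p != i -> V p = 0) ->
    exists k, `|sdef U l - sdef V l| <= `|A k - B k|.
  move=> i Ui Vi; exists i; rewrite (sdef_supp _ _ Ui) (sdef_supp _ _ Vi).
  by case: eqP => _; rewrite ?UV // -opprD normrN UV.
have [[i ui]|nu] := pselect (exists i, 0 < U i).
  have Ui := zero_of U i U0 uniqU ui.
  have [[j /andP[ji vj]]|nv] := pselect (exists j, (j != i) && (0 < V j)).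
    have Vj := zero_of V j V0 uniqV vj.
    exists i; rewrite (sdef_supp _ _ Ui) (sdef_supp _ _ Vj).
    have e1 : `|(if l == i then U i else - U i) - (if l == j then V j else - V j)| <= U i + V j.
      by case: eqP; case: eqP => _ _; rewrite ler_norml; apply/andP; split; lra.
    apply: (le_trans e1).
    have := AA _ _ ji; have := BB _ _ ji; have := UA _ ui; have := VB _ vj => h1 h2 h3 h4.
    by rewrite (le_trans _ (ler_norm _)) //; lra.
  apply: (case2 i) => // p pi; apply/eqP; rewrite eq_le V0 andbT leNgt; apply/negP => vp.
  by apply: nv; exists p; rewrite pi.
have U0' : forall p, U p = 0.
  move=> p; apply/eqP; rewrite eq_le U0 andbT leNgt; apply/negP => up; apply: nu; by exists p.
have [[j vj]|nv] := pselect (exists j, 0 < V j).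
  by apply: (case2 j) => //; exact: zero_of.
apply: (case2 l) => // p _; apply/eqP; rewrite eq_le V0 andbT leNgt; apply/negP => vp.
by apply: nv; exists p.
Qed.
End Local.
Section Graph.
Variables (V : finType) (e : rel V).
Hypotheses (esym : symmetric e) (eirr : irreflexive e) (econn : forall x y, connect e x y)
  (V2 : (1 < #|V|)%N).
Local Notation gball := (Defs.ball e).

Lemma ball_S k x : gball k.+1 x = gball k x :|: [set z | [exists w in gball k x, e w z]].
Proof. by rewrite /Defs.ball iterS. Qed.

Lemma ball_sub k x : gball k x \subset gball k.+1 x.
Proof. by rewrite ball_S finset.subsetUl. Qed.

Lemma ball_mono {k k'} x : (k <= k')%N -> gball k x \subset gball k' x.
Proof.
move=> /subnK <-; elim: (k' - k)%N => [|d IH]; first by rewrite add0n subxx.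
by rewrite addSn (fintype.subset_trans IH) // ball_sub.
Qed.

Lemma ball_path {x p} : path e x p -> last x p \in gball (size p) x.
Proof.
elim/last_ind: p => [|p z IH]; first by rewrite /Defs.ball /= set11.
rewrite rcons_path last_rcons size_rcons => /andP[pp ez].
rewrite ball_S inE; apply/orP; right; rewrite inE; apply/existsP; exists (last x p).
by rewrite IH.
Qed.

Lemma ball_ex k x y : y \in gball k x ->
  exists p, [/\ (size p <= k)%N, path e x p & last x p = y].
Proof.
elim: k y => [|k IH] y.
  by rewrite /Defs.ball /= inE => /eqP ->; exists [::].
rewrite ball_S inE => /orP[/IH [p [sp pp lp]]|].
  by exists p; split => //; rewrite ltnW.
rewrite inE => /existsP [w /andP[/IH [p [sp pp lp]] ewy]].
exists (rcons p y); rewrite size_rcons rcons_path last_rcons pp lp ewy; split => //.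
Qed.

Lemma ball_first k x y : y \in gball k.+1 x -> y = x \/ exists2 z, e x z & y \in gball k z.
Proof.
move=> /ball_ex [[|z p] [sp pp lp]]; first by left.
right; exists z; first by case/andP: pp.
move: pp => /= /andP[_ pp]; rewrite -lp.
have sub := @ball_mono (size p) k z sp.
by move: (ball_path pp); apply: (fintype.subsetP sub).
Qed.

Lemma reach x y : exists2 k, (k < #|V|)%N & y \in gball k x.
Proof.
have /connectP [p pp ->] := econn x y.
case: (shortenP pp) => p' pp' up' _.
exists (size p'); last by rewrite ball_path.
have := card_uniqP up'; rewrite /= => <-; exact: max_card.
Qed.

Lemma gdist_le {k x y} : y \in gball k x -> (gdist e x y <= k)%N.
Proof.
move=> yk; rewrite /gdist; have [kn|nk] := ltnP k #|V|.
  rewrite leqNgt; apply/negP => /(before_find 0); rewrite nth_iota // add0n.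
  by rewrite yk.
apply: leq_trans nk; rewrite -[X in (_ <= X)%N](size_iota 0 #|V|); exact: find_size.
Qed.

Lemma gdist_in x y : y \in gball (gdist e x y) x /\ (gdist e x y < #|V|)%N.
Proof.
have [k kn yk] := reach x y.
have gk := gdist_le yk; have gn : (gdist e x y < #|V|)%N by exact: leq_ltn_trans gk kn.
split => //; have := gn; rewrite /gdist -[X in (_ < X)%N -> _](size_iota 0 #|V|) -has_find => /(nth_find 0).
by rewrite nth_iota ?add0n // -(size_iota 0 #|V|).
Qed.

Lemma gdist0 x y : gdist e x y = 0%N -> x = y.
Proof. by move=> g0; have [] := gdist_in x y; rewrite g0 /Defs.ball /= inE => /eqP. Qed.

End Graph.
Arguments gdist0 {V e}. Arguments gdist_in {V e}. Arguments gdist_le {V e k x y}. Arguments ball_first {V e k x y}.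
Section Bnd.
Variables (V : finType) (e : rel V).
Hypotheses (esym : symmetric e) (eirr : irreflexive e) (econn : forall x y, connect e x y)
  (V2 : (1 < #|V|)%N).

Lemma sum_const_nbr (R : realType) (x : V) (c : R) :
  \sum_(y in V | e x y) c = (gdeg e x)%:R * c.
Proof.
rewrite (eq_bigl (fun y => y \in finset (fun y => e x y))) ?sumr_const ?mulr_natl //.
by move=> y; rewrite !inE.
Qed.

Lemma bnd_ex (R : realType) : exists x, @in_boundary V e R x.
Proof.
have /card_gt0P [y0 _] : (0 < #|V|)%N by exact: ltnW.
case: (@arg_maxnP V y0 predT (fun z => gdist e z y0) isT) => x _ xmax.
set d := gdist e x y0.
have [z zy] : exists z, z != y0.
  move: V2; rewrite (cardD1 y0) inE add1n ltnS => /card_gt0P [z]; rewrite !inE => /andP[].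
  by move=> zy _; exists z.
have dpos : (0 < d)%N.
  apply: leq_trans (xmax z isT); rewrite lt0n; apply/negP => /eqP /(gdist0 econn) /eqP.
  by rewrite (negPf zy).
have [yd _] := gdist_in econn x y0; rewrite -/d in yd.
have [d' dd'] : exists d', d = d'.+1 by move: dpos; case: (d) => // d' _; exists d'.
rewrite dd' in yd; case: (ball_first yd) => [yx|[z0 ez0 yz0]].
  have : (gdist e x y0 <= 0)%N by apply: gdist_le; rewrite yx /Defs.ball /= inE.
  by rewrite -/d dd'.
exists x, y0; rewrite /mean_val -/d.
have degpos : (0 < gdeg e x)%N by apply/card_gt0P; exists z0; rewrite inE.
have degR : 0 < (gdeg e x)%:R :> R by rewrite ltr0n.
rewrite ltr_pdivrMl // -sum_const_nbr.
rewrite (bigD1 z0) //= [X in _ < X](bigD1 z0) //=.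
apply: ltr_leD.
  rewrite ltr_nat dd' ltnS; exact: gdist_le.
apply: ler_sum => y /andP[_ _]; rewrite ler_nat; exact: xmax.
Qed.
End Bnd.
Lemma geo_small (R : realType) (q K th : R) : 0 <= th < 1 -> 0 <= K ->
  (forall n, q <= K * th ^+ n) -> q <= 0.
Proof.
move=> /andP[th0 th1] K0 hq; rewrite leNgt; apply/negP => qpos.
have := @cvg_geometric R 1 th; rewrite ger0_norm // => /(_ th1).
move/cvgrPdist_lt => /(_ (q / (K + 1))).
have qK : 0 < q / (K + 1) by rewrite divr_gt0 // ltr_wpDl.
move=> /(_ qK) [N _ HN].
have := HN N (leqnn N); rewrite sub0r normrN /geometric /= mul1r ger0_norm ?exprn_ge0 //.
move=> hN; have := hq N.
have : K * th ^+ N <= (K + 1) * th ^+ N by rewrite ler_wpM2r ?exprn_ge0 // lerDl.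
rewrite ltr_pdivlMr ?ltr_wpDl // mulrC in hN.
lra.
Qed.
Section Main.
Variables (R : realType) (V : finType) (e : rel V) (m : nat)
  (H : V -> R -> R) (f : 'I_m -> V -> R -> R) (phi : 'I_m -> V -> R).
Hypotheses (esym : symmetric e) (eirr : irreflexive e) (econn : forall x y, connect e x y)
  (V2 : (1 < #|V|)%N) (m1 : (1 <= m)%N)
  (Hc : forall x, {within [set s : R | 0 <= s], continuous (H x)})
  (fc : forall l x, {within [set s : R | 0 <= s], continuous (f l x)})
  (H0 : forall x, H x 0 = 0) (f0 : forall l x, f l x 0 = 0)
  (Hodd : forall x s, s < 0 -> H x s = - H x (- s))
  (fodd : forall l x s, s < 0 -> f l x s = - f l x (- s))
  (phi0 : forall l x, @in_boundary V e R x -> 0 <= phi l x)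
  (phid : forall i j x, i != j -> @in_boundary V e R x -> phi i x * phi j x = 0)
  (Hmono : forall x s t, 0 <= s -> s <= t -> H x s <= H x t)
  (fmono : forall l x s t, 0 <= s -> s <= t -> f l x s <= f l x t)
  (Hlip : forall x s t, 0 <= s -> 0 <= t -> `|H x s - H x t| <= `|s - t|).

Lemma bex : exists x, @in_boundary V e R x.
Proof. exact: bnd_ex. Qed.

Definition Bd : {set V} := finset (fun x => `[< @in_boundary V e R x >]).
Definition Lset k := iter k (fun S : {set V} => S :|: finset (fun z => [exists w in S, e w z])) Bd.

Lemma Lset_S k : Lset k.+1 = Lset k :|: finset (fun z => [exists w in Lset k, e w z]).
Proof. by []. Qed.

Lemma Lset_path k w p : w \in Lset k -> path e w p -> last w p \in Lset (k + size p).
Proof.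
move=> wk; elim/last_ind: p => [|p z IH]; first by rewrite addn0.
rewrite rcons_path last_rcons size_rcons addnS => /andP[pp ez].
rewrite Lset_S !inE; apply/orP; right; apply/existsP; exists (last w p).
by rewrite IH.
Qed.

Lemma lay_reach x : exists k, x \in Lset k.
Proof.
have [b bb] := bex; have /connectP [p pp ->] := econn b x.
exists (0 + size p)%N; apply: Lset_path pp.
by rewrite /Lset /= /Bd inE; apply/asboolP.
Qed.

Definition rho x := ex_minn (lay_reach x).

Lemma rho_in x : x \in Lset (rho x).
Proof. by rewrite /rho; case: ex_minnP. Qed.

Lemma rho_min {x k} : x \in Lset k -> (rho x <= k)%N.
Proof. by rewrite /rho; case: ex_minnP => n _ Hn; exact: Hn. Qed.

Lemma rho0 x : (rho x == 0)%N = `[< @in_boundary V e R x >].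
Proof.
apply/idP/idP.
  by move=> /eqP r0; have := rho_in x; rewrite r0 /= /Bd inE.
by move=> bx; rewrite -leqn0; apply: rho_min; rewrite /= /Bd inE.
Qed.

Lemma rho_nbr x y : e x y -> (rho y <= (rho x).+1)%N.
Proof.
move=> exy; apply: rho_min; rewrite Lset_S !inE; apply/orP; right.
by apply/existsP; exists x; rewrite rho_in.
Qed.

Lemma rho_down x k : rho x = k.+1 -> exists2 y, e x y & (rho y <= k)%N.
Proof.
move=> rk; have := rho_in x; rewrite rk Lset_S !inE => /orP[xk|].
  by have := rho_min xk; rewrite rk ltnn.
move=> /existsP [y /andP[yk eyx]]; exists y; first by rewrite esym.
exact: rho_min.
Qed.


Definition rr : R := (#|V|%:R)^-1.
Definition wt x : R := 1 - rr ^+ rho x.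

Lemma V0 : (0 < #|V|)%N. Proof. exact: ltnW V2. Qed.

Lemma rr_gt0 : 0 < rr.
Proof. rewrite invr_gt0 ltr0n; exact: V0. Qed.

Lemma rr_lt1 : rr < 1.
Proof. rewrite invf_lt1; first by rewrite ltr1n; exact: V2. rewrite ltr0n; exact: V0. Qed.

Lemma rrX_le {k k'} : (k <= k')%N -> rr ^+ k' <= rr ^+ k.
Proof. by move=> kk; apply: ler_wiXn2l => //; [exact: ltW rr_gt0|exact: ltW rr_lt1]. Qed.


Lemma rrX_le1 k : rr ^+ k <= 1.
Proof. by have := rrX_le (leq0n k); rewrite expr0. Qed.

Lemma wt_ge0 x : 0 <= wt x.
Proof. by rewrite /wt subr_ge0 rrX_le1. Qed.

Lemma wt_le1 x : wt x <= 1.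
Proof. by rewrite /wt lerBlDr lerDl exprn_ge0 // ltW // rr_gt0. Qed.

Lemma wt_bnd x : @in_boundary V e R x -> wt x = 0.
Proof.
move=> bx; have : (rho x == 0)%N by rewrite rho0; apply/asboolP.
by rewrite /wt => /eqP ->; rewrite expr0 subrr.
Qed.

Lemma wt_int x : ~ @in_boundary V e R x -> 0 < wt x.
Proof.
move=> nb; have : (rho x != 0)%N by rewrite rho0; apply/asboolP.
rewrite /wt subr_gt0 -(expr0 rr); case: (rho x) => // k _.
by rewrite ltr_iXn2l //; [exact: rr_gt0|exact: rr_lt1].
Qed.

Lemma deg_le x : ((gdeg e x)%:R : R) * rr <= 1.
Proof.
have dV : (gdeg e x <= #|V|)%N by exact: max_card.
rewrite /rr ler_pdivrMr ?mul1r ?ler_nat //; rewrite ltr0n; exact: V0.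
Qed.

Lemma wt_strict x : ~ @in_boundary V e R x ->
  \sum_(y in V | e x y) wt y < (gdeg e x)%:R * wt x.
Proof.
move=> nb; have : (rho x != 0)%N by rewrite rho0; apply/asboolP.
case rx: (rho x) => [//|k] _.
have [z0 ez0 rz0] := rho_down x k rx.
pose c := 1 - rr ^+ k.+2.
have h1 : wt z0 <= 1 - rr ^+ k by rewrite /wt lerB // rrX_le.
have h2 : \sum_(y in V | e x y && (y != z0)) wt y <= \sum_(y in V | e x y && (y != z0)) c.
  apply: ler_sum => y /andP[_ /andP[exy _]]; rewrite /wt lerB // rrX_le //.
  by have := rho_nbr x y exy; rewrite rx.
have h3 : \sum_(y in V | e x y) c = c + \sum_(y in V | e x y && (y != z0)) c.
  by rewrite (bigD1 z0) //=.
rewrite sum_const_nbr in h3.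
have hq := deg_le x.
have r0 := rr_gt0; have r1 := rr_lt1.
have a0 : 0 < rr ^+ k by rewrite exprn_gt0.
set q := (gdeg e x)%:R in hq h3 *.
set a := rr ^+ k in h1 a0 *.
have e1 : rr ^+ k.+2 = a * rr * rr by rewrite !exprS mulrA mulrC -mulrA mulrC.
have e2 : rr ^+ k.+1 = a * rr by rewrite exprS mulrC.
rewrite /c e1 in h2 h3.
have ex : wt x = 1 - a * rr by rewrite /wt rx e2.
rewrite (bigD1 z0) //= ex.
apply: (le_lt_trans (lerD h1 h2)).
have key : 0 < a * (1 - rr) * (1 + rr - q * rr).
  have k1 : 0 < 1 - rr by lra.
  have k2 : 0 < 1 + rr - q * rr by lra.
  by rewrite !mulr_gt0.
nra.
Qed.

Definition Bnd x : bool := `[< @in_boundary V e R x >].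

Lemma BndP x : reflect (@in_boundary V e R x) (Bnd x).
Proof. exact: asboolP. Qed.

Lemma deg_pos x : ~ @in_boundary V e R x -> (0 < gdeg e x)%N.
Proof.
move=> nb; have : (rho x != 0)%N by rewrite rho0; apply/asboolP.
case rx: (rho x) => [//|k] _.
have [z0 ez0 _] := rho_down x k rx.
by apply/card_gt0P; exists z0; rewrite inE.
Qed.

Definition rat x : R := if Bnd x then 0
  else (\sum_(y in V | e x y) wt y) / ((gdeg e x)%:R * wt x).

Definition th : R := \big[Num.max/0]_(x : V) rat x.

Lemma rat_ge0 x : 0 <= rat x.
Proof.
rewrite /rat; case: ifP => // _; apply: divr_ge0.
  by apply: sumr_ge0 => y _; exact: wt_ge0.
by rewrite mulr_ge0 ?ler0n ?wt_ge0.
Qed.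

Lemma th_ge0 : 0 <= th.
Proof.
have [x _] := bex; apply: le_trans (rat_ge0 x) _.
exact: (le_bigmax 0 rat x).
Qed.

Lemma th_lt1 : th < 1.
Proof.
apply: bigmax_lt => // x _; rewrite /rat; case: (BndP x) => // nb.
have dp : 0 < (gdeg e x)%:R * wt x by rewrite mulr_gt0 ?ltr0n ?deg_pos ?wt_int.
by rewrite ltr_pdivrMr // mul1r wt_strict.
Qed.

Lemma th_bound x : ~ @in_boundary V e R x ->
  \sum_(y in V | e x y) wt y <= th * ((gdeg e x)%:R * wt x).
Proof.
move=> nb; have dp : 0 < (gdeg e x)%:R * wt x by rewrite mulr_gt0 ?ltr0n ?deg_pos ?wt_int.
have := le_bigmax 0 rat x; rewrite -/th /rat; case: (BndP x) => // _.
by rewrite ler_pdivrMr.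
Qed.

Lemma mean_bound x (D : V -> R) (E : R) : ~ @in_boundary V e R x -> 0 <= E ->
  (forall y, `|D y| <= E * wt y) -> `|mean_val e D x| <= th * E * wt x.
Proof.
move=> nb E0 hD; rewrite /mean_val.
have qp : 0 < (gdeg e x)%:R :> R by rewrite ltr0n deg_pos.
rewrite normrM (ger0_norm (x := _^-1)); last by rewrite invr_ge0 ler0n.
rewrite ler_pdivrMl //.
apply: le_trans (ler_norm_sum _ _ _) _.
apply: le_trans (ler_sum _ (fun y _ => hD y)) _.
rewrite -mulr_sumr.
have := th_bound x nb => hb.
have := ler_wpM2l E0 hb.
move=> h; apply: le_trans h _; rewrite le_eqVlt; apply/orP; left; apply/eqP.
ring.
Qed.

Definition aa (u : 'I_m -> V -> R) (l : 'I_m) (x : V) : R :=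
  mean_val e (u l) x - \sum_(p < m | p != l) mean_val e (u p) x.

Definition ss (u : 'I_m -> V -> R) (l : 'I_m) (x : V) : R := sdef R m (fun p => u p x) l.

Lemma mean_ext {F G : V -> R} x : (forall y, F y = G y) -> mean_val e F x = mean_val e G x.
Proof. by move=> FG; rewrite /mean_val; congr (_ * _); apply: eq_bigr => y _. Qed.

Lemma mean_sub (F G : V -> R) x : mean_val e (fun y => F y - G y) x = mean_val e F x - mean_val e G x.
Proof. by rewrite /mean_val sumrB mulrBr. Qed.

Lemma mean_sum (P : pred 'I_m) (G : 'I_m -> V -> R) x :
  mean_val e (fun y => \sum_(p | P p) G p y) x = \sum_(p | P p) mean_val e (G p) x.
Proof. by rewrite /mean_val exchange_big mulr_sumr. Qed.

Lemma mean_lin u l x : mean_val e (ss u l) x = aa u l x.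
Proof.
rewrite /ss /sdef /aa (mean_sub (u l) (fun y => \sum_(p < m | p != l) u p y)).
by rewrite (mean_sum (fun p => p != l) u).
Qed.

Lemma mean_ge0 {F : V -> R} x : (forall y, 0 <= F y) -> 0 <= mean_val e F x.
Proof.
move=> F0; rewrite /mean_val mulr_ge0 ?invr_ge0 ?ler0n //.
by apply: sumr_ge0 => y _.
Qed.

Lemma mean_bound1 x (D : V -> R) (E : R) : ~ @in_boundary V e R x ->
  (forall y, `|D y| <= E) -> `|mean_val e D x| <= E.
Proof.
move=> nb hD; rewrite /mean_val.
have qp : 0 < (gdeg e x)%:R :> R by rewrite ltr0n deg_pos.
rewrite normrM (ger0_norm (x := _^-1)); last by rewrite invr_ge0 ler0n.
rewrite ler_pdivrMl //.
apply: le_trans (ler_norm_sum _ _ _) _.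
apply: le_trans (ler_sum _ (fun y _ => hD y)) _.
by rewrite sum_const_nbr.
Qed.

Lemma sol_ex' l x a : exists t, sol R (H x) (f l x) a t.
Proof. exact: (@sol_ex R (H x) (f l x) (f0 l x) (fmono l x) (fc l x) a). Qed.

Definition Phi l x a : R := proj1_sig (cid (sol_ex' l x a)).

Lemma PhiP l x a : sol R (H x) (f l x) a (Phi l x a).
Proof. exact: (proj2_sig (cid (sol_ex' l x a))). Qed.

Let solL l x := @sol_lip R (H x) (f l x) (H0 x) (Hodd x) (Hmono x) (Hlip x) (f0 l x) (fmono l x).
Let solP l x := @sol_pos R (H x) (f l x) (H0 x) (Hodd x) (Hmono x) (Hlip x) (f0 l x) (fmono l x).

Definition TT (S : 'I_m -> V -> R) l x : R :=
  if Bnd x then phi l x else Phi l x (mean_val e (S l) x).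

Definition T u := TT (ss u).

Lemma TT_ext S S' l x : (forall y, S l y = S' l y) -> TT S l x = TT S' l x.
Proof. by move=> SS; rewrite /TT (mean_ext x SS). Qed.

Lemma TT_ge0 S l x : 0 <= TT S l x.
Proof. rewrite /TT; case: (BndP x) => [bx|_]; [exact: phi0|exact: (PhiP l x _).1]. Qed.

Lemma ss_ext u v l x : (forall p, u p x = v p x) -> ss u l x = ss v l x.
Proof.
move=> uv; rewrite /ss /sdef uv; congr (_ - _); apply: eq_bigr => p _; exact: uv.
Qed.

Lemma contr {u v E} : (forall l x, 0 <= u l x) -> (forall l x, 0 <= v l x) -> 0 <= E ->
  (forall l x, `|ss u l x - ss v l x| <= E * wt x) ->
  forall l x, `|ss (T u) l x - ss (T v) l x| <= th * E * wt x.
Proof.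
move=> u0 v0 E0 huv l x.
case: (BndP x) => [bx|nb].
  rewrite (@ss_ext (T u) (T v)) ?subrr ?normr0 ?mulr_ge0 ?th_ge0 ?wt_ge0 //.
  by move=> p; rewrite /T /TT; case: (BndP x).
pose A := fun p => mean_val e (ss u p) x.
pose B := fun p => mean_val e (ss v p) x.
have TuE : forall p, T u p x = Phi p x (A p) by move=> p; rewrite /T /TT; case: (BndP x).
have TvE : forall p, T v p x = Phi p x (B p) by move=> p; rewrite /T /TT; case: (BndP x).
have AA : forall k j, k != j -> A k + A j <= 0.
  move=> k j kj; rewrite /A !mean_lin /aa.
  exact: (@sdef_pair R m (fun p => mean_val e (u p) x) k j (fun p => mean_ge0 x (u0 p)) kj).
have BB : forall k j, k != j -> B k + B j <= 0.
  move=> k j kj; rewrite /B !mean_lin /aa.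
  exact: (@sdef_pair R m (fun p => mean_val e (v p) x) k j (fun p => mean_ge0 x (v0 p)) kj).
have [k hk] := @local_est R m (fun p => T u p x) (fun p => T v p x) A B
  (fun p => TT_ge0 _ p x) (fun p => TT_ge0 _ p x)
  (fun p => ltac:(cbv beta; rewrite TuE; exact: (fun hp => (solP p x _ _ (PhiP p x _) hp).2)))
  (fun p => ltac:(cbv beta; rewrite TvE; exact: (fun hp => (solP p x _ _ (PhiP p x _) hp).2)))
  (fun p => ltac:(cbv beta; rewrite TuE TvE; exact: (solL p x _ _ _ _ (PhiP p x _) (PhiP p x _))))
  AA BB l.
apply: le_trans hk _; rewrite /A /B -mean_sub.
apply: mean_bound => // y; exact: huv.
Qed.

Definition sys (u : 'I_m -> V -> R) := forall l : 'I_m,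
  (forall x, ~ @in_boundary V e R x ->
     u l x = Num.max (H x (mean_val e (u l) x - \sum_(p < m | p != l) mean_val e (u p) x)
                      - f l x (u l x)) 0) /\
  (forall x, @in_boundary V e R x -> u l x = phi l x).

Lemma sys_fix {u} : sys u -> (forall l x, 0 <= u l x) /\ (forall l x, u l x = T u l x).
Proof.
move=> su.
have u0 : forall l x, 0 <= u l x.
  move=> l x; case: (su l) => hi hb; case: (BndP x) => [bx|nb].
    by rewrite hb //; exact: phi0.
  by rewrite hi // le_max lexx orbT.
split => // l x; case: (su l) => hi hb; rewrite /T /TT; case: (BndP x) => [bx|nb].
  exact: hb.
have s1 : sol R (H x) (f l x) (mean_val e (ss u l) x) (u l x).
  by split => //; rewrite mean_lin /aa; exact: hi.
apply/eqP; rewrite -subr_eq0 -normr_le0; apply: le_trans (solL l x _ _ _ _ s1 (PhiP l x _)) _.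
by rewrite subrr normr0.
Qed.

Lemma fix_sys u : (forall l x, u l x = T u l x) -> sys u.
Proof.
move=> fu l; split => x.
  move=> nb; have := fu l x; rewrite /T /TT; case: (BndP x) => // _ ->.
  have [_ hP] := PhiP l x (mean_val e (ss u l) x).
  by rewrite {1}hP mean_lin /aa.
by move=> bx; rewrite fu /T /TT; case: (BndP x).
Qed.

Lemma bound_ex (D : 'I_m -> V -> R) : (forall l x, @in_boundary V e R x -> D l x = 0) ->
  exists E, 0 <= E /\ forall l x, `|D l x| <= E * wt x.
Proof.
move=> Db; exists (\sum_(x : V) \sum_(l < m) `|D l x| / wt x).
have t0 : forall x l, 0 <= `|D l x| / wt x by move=> x l; rewrite divr_ge0 ?wt_ge0.
split; first by apply: sumr_ge0 => x _; apply: sumr_ge0 => l _.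
move=> l x; case: (BndP x) => [bx|nb].
  by rewrite Db // normr0 mulr_ge0 ?wt_ge0 // sumr_ge0 // => y _; apply: sumr_ge0.
have wp := wt_int x nb.
rewrite -ler_pdivrMr //.
apply: le_trans (_ : \sum_(l0 < m) `|D l0 x| / wt x <= _).
  by rewrite (bigD1 l) //= lerDl sumr_ge0.
by rewrite [X in _ <= X](bigD1 x) //= lerDl sumr_ge0 // => y _; apply: sumr_ge0.
Qed.

Lemma sdef_diff (U W : 'I_m -> R) (K : R) l : (forall p, `|U p - W p| <= K) ->
  `|sdef R m U l - sdef R m W l| <= m%:R * K.
Proof.
move=> hK; rewrite /sdef.
have -> : U l - \sum_(p < m | p != l) U p - (W l - \sum_(p < m | p != l) W p) =
   (U l - W l) - \sum_(p < m | p != l) (U p - W p) by rewrite sumrB; ring.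
apply: le_trans (ler_normB _ _) _.
apply: le_trans (lerD (hK l) (le_trans (ler_norm_sum _ _ _) (ler_sum _ (fun p _ => hK p)))) _.
rewrite sumr_const.
have -> : #|[pred p : 'I_m | p != l]| = m.-1.
  by rewrite cardC1 card_ord.
have -> : (m%:R : R) = (m.-1)%:R + 1 by rewrite natr1 prednK.
by rewrite mulrDl mul1r mulr_natl addrC.
Qed.

Lemma ss_T_bnd u v l x : @in_boundary V e R x -> ss (T u) l x = ss (T v) l x.
Proof. by move=> bx; apply: ss_ext => p; rewrite /T /TT; case: (BndP x). Qed.

Lemma sys_uniq u v : sys u -> sys v -> u = v.
Proof.
move=> su sv; have [u0 fu] := sys_fix su; have [v0 fv] := sys_fix sv.
have Db : forall l x, @in_boundary V e R x -> ss u l x - ss v l x = 0.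
  move=> l x bx; rewrite (@ss_ext u v l x) ?subrr // => p.
  by rewrite (su p).2 // (sv p).2.
have [E0 [E0p hE]] := bound_ex (fun l x => ss u l x - ss v l x) Db.
have it : forall n l x, `|ss u l x - ss v l x| <= th ^+ n * E0 * wt x.
  elim=> [|n IH] l x; first by rewrite expr0 mul1r.
  rewrite (@ss_ext u (T u) l x (fun p => fu p x)) (@ss_ext v (T v) l x (fun p => fv p x)).
  have hE' : 0 <= th ^+ n * E0 by rewrite mulr_ge0 ?exprn_ge0 ?th_ge0.
  apply: le_trans (contr u0 v0 hE' IH l x) _.
  by rewrite exprS !mulrA.
have seq : forall l x, ss u l x = ss v l x.
  move=> l x; apply/eqP; rewrite -subr_eq0 -normr_le0.
  apply: (@geo_small R _ (E0 * wt x) th).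
  - by rewrite th_ge0 th_lt1.
  - by rewrite mulr_ge0 ?wt_ge0.
  - by move=> n; rewrite (mulrC (E0 * wt x)) mulrA; exact: it.
apply/funext => l; apply/funext => x; rewrite (fu l x) (fv l x) /T.
by apply: TT_ext => y; exact: seq.
Qed.

Lemma sys_exists : exists u, sys u.
Proof.
pose z := fun (l : 'I_m) (x : V) => (0 : R).
pose us := fun n => iter n T (T z).
have us0 : forall n l x, 0 <= us n l x.
  by move=> [|n] l x; exact: TT_ge0.
have Db : forall l x, @in_boundary V e R x -> ss (us 1%N) l x - ss (us 0%N) l x = 0.
  move=> l x bx; apply/eqP; rewrite subr_eq0; apply/eqP; exact: (@ss_T_bnd (us 0%N) z l x bx).
have [E0 [E0p hE]] := bound_ex (fun l x => ss (us 1%N) l x - ss (us 0%N) l x) Db.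

have dn : forall n l x, `|ss (us n.+1) l x - ss (us n) l x| <= th ^+ n * E0 * wt x.
  elim=> [|n IH] l x; first by rewrite expr0 mul1r; exact: hE.
  have hE' : 0 <= th ^+ n * E0 by rewrite mulr_ge0 ?exprn_ge0 ?th_ge0.
  apply: le_trans (@contr (us n.+1) (us n) _ (us0 _) (us0 _) hE' IH l x) _.
  by rewrite exprS !mulrA.
have th0 := th_ge0; have th1 := th_lt1.
have dn' : forall n l x, `|ss (us n.+1) l x - ss (us n) l x| <= E0 * th ^+ n.
  move=> n l x; apply: le_trans (dn n l x) _.
  have k : 0 <= th ^+ n * E0 by rewrite mulr_ge0 ?exprn_ge0 ?th_ge0.
  rewrite [E0 * _]mulrC -[X in _ <= X]mulr1.
  by apply: ler_wpM2l => //; exact: wt_le1.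
pose c := E0 / (1 - th).
have c0 : 0 <= c by rewrite divr_ge0 // subr_ge0 ltW.
have cE : E0 = c * (1 - th) by rewrite /c -mulrA mulVf ?mulr1 // subr_eq0 eq_sym lt_eqF.
have tele : forall n k l x, `|ss (us (n + k)%N) l x - ss (us n) l x| <= c * (th ^+ n - th ^+ (n + k)).
  move=> n; elim=> [|k IH] l x; first by rewrite addn0 !subrr normr0 mulr0.
  rewrite addnS; apply: le_trans (ler_distD (ss (us (n + k)%N) l x) _ _) _.
  have h1 := dn' (n + k)%N l x; have h2 := IH l x.
  apply: le_trans (lerD h1 h2) _; rewrite cE exprSr.
  rewrite le_eqVlt; apply/orP; left; apply/eqP; ring.
have tele' : forall n j l x, (n <= j)%N -> `|ss (us j) l x - ss (us n) l x| <= c * th ^+ n.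
  move=> n j l x nj; rewrite -(subnKC nj); apply: le_trans (tele n (j - n)%N l x) _.
  by rewrite ler_wpM2l // lerBlDr lerDl exprn_ge0.
pose S l x := [set y : R | exists j, y = ss (us j) l x - c * th ^+ j].
pose sstar l x := sup (S l x).
have hs : forall l x, has_sup (S l x).
  move=> l x; split; first by exists (ss (us 0%N) l x - c * th ^+ 0); exists 0%N.
  exists (ss (us 0%N) l x + c) => y [j ->].
  have := tele' 0%N j l x (leq0n j); rewrite expr0 mulr1 => /(le_trans (ler_norm _)) h.
  have : 0 <= c * th ^+ j by rewrite mulr_ge0 ?exprn_ge0.
  lra.
have sb : forall n l x, `|ss (us n) l x - sstar l x| <= c * th ^+ n.
  move=> n l x.
  have up : sstar l x <= ss (us n) l x + c * th ^+ n.
    apply: ge_sup; first exact: (hs l x).1.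
    move=> y [j ->]; have [nj|jn] := leqP n j.
      have := tele' n j l x nj; rewrite ler_norml => /andP[_ h].
      have : 0 <= c * th ^+ j by rewrite mulr_ge0 ?exprn_ge0.
      lra.
    have := tele' j n l x (ltnW jn); rewrite ler_norml => /andP[h _].
    have : 0 <= c * th ^+ n by rewrite mulr_ge0 ?exprn_ge0.
    lra.
  have lo : ss (us n) l x - c * th ^+ n <= sstar l x.
    by apply: sup_upper_bound; [exact: hs | exists n].
  rewrite ler_norml; apply/andP; split; lra.
have close : forall n p x, `|TT sstar p x - us n.+1 p x| <= c * th ^+ n.
  move=> n p x; rewrite /= /T /TT; case: (BndP x) => [_|nb].
    by rewrite subrr normr0 mulr_ge0 ?exprn_ge0.
  apply: le_trans (solL p x _ _ _ _ (PhiP p x _) (PhiP p x _)) _.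
  rewrite -mean_sub; apply: mean_bound1 => // y.
  by rewrite distrC; exact: sb.
have key : forall n l x, `|ss (TT sstar) l x - sstar l x| <= (m%:R * c + c) * th ^+ n.
  move=> n l x.
  apply: le_trans (ler_distD (ss (us n.+1) l x) _ _) _.
  have h1 : `|ss (TT sstar) l x - ss (us n.+1) l x| <= m%:R * (c * th ^+ n).
    exact: sdef_diff.
  have h2 : `|ss (us n.+1) l x - sstar l x| <= c * th ^+ n.
    apply: le_trans (sb n.+1 l x) _; rewrite ler_wpM2l // exprS ler_piMl ?exprn_ge0 //.
    exact: ltW.
  apply: le_trans (lerD h1 h2) _; rewrite le_eqVlt; apply/orP; left; apply/eqP; ring.
have eqs : forall l x, ss (TT sstar) l x = sstar l x.
  move=> l x; apply/eqP; rewrite -subr_eq0 -normr_le0.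
  apply: (@geo_small R _ (m%:R * c + c) th).
  - by rewrite th0 th1.
  - by rewrite addr_ge0 // mulr_ge0 // ler0n.
  - by move=> n; exact: key.
exists (TT sstar); apply: fix_sys => l x; rewrite /T.
by apply: TT_ext => y; rewrite eqs.
Qed.

Lemma main_thm : exists! u, sys u.
Proof.
have [u su] := sys_exists; exists u; split => // v sv; exact: sys_uniq.
Qed.

End Main.
Theorem theorem1 (R : realType) (V : finType) (e : rel V) (m : nat)
  (H : V -> R -> R) (f : 'I_m -> V -> R -> R) (phi : 'I_m -> V -> R) :
  (* G = (V, e) is a finite, connected, undirected simple graph with >= 2 vertices *)
  symmetric e -> irreflexive e -> (forall x y, connect e x y) -> (1 < #|V|)%N ->
  (1 <= m)%N ->
  (* H and f_l: continuous in s on [0,oo), vanish at 0, odd extension to s < 0 *)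
  (forall x, {within [set s : R | 0 <= s], continuous (H x)}) ->
  (forall l x, {within [set s : R | 0 <= s], continuous (f l x)}) ->
  (forall x, H x 0 = 0) -> (forall l x, f l x 0 = 0) ->
  (forall x s, s < 0 -> H x s = - H x (- s)) ->
  (forall l x s, s < 0 -> f l x s = - f l x (- s)) ->
  (* boundary data: nonnegative with disjoint supports on the boundary *)
  (forall l x, @in_boundary V e R x -> 0 <= phi l x) ->
  (forall i j x, i != j -> @in_boundary V e R x -> phi i x * phi j x = 0) ->
  (* monotonicity on [0,oo) *)
  (forall x s t, 0 <= s -> s <= t -> H x s <= H x t) ->
  (forall l x s t, 0 <= s -> s <= t -> f l x s <= f l x t) ->
  (* H is 1-Lipschitz on [0,oo) *)
  (forall x s t, 0 <= s -> 0 <= t -> `|H x s - H x t| <= `|s - t|) ->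
  exists! u : 'I_m -> V -> R,
    forall l : 'I_m,
      (forall x, ~ @in_boundary V e R x ->
         u l x = Num.max (H x (mean_val e (u l) x
                              - \sum_(p < m | p != l) mean_val e (u p) x)
                          - f l x (u l x)) 0) /\
      (forall x, @in_boundary V e R x -> u l x = phi l x).
Proof.
move=> esym eirr econn V2 m1 Hc fc H0 f0 Hodd fodd phi0 phid Hmono fmono Hlip.
by apply: main_thm.
Qed.
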